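(* Let $m$ be an odd integer, $n\ge 0$ an integer, and let $x$ be one of the $n+1$ consecutive odd integers $m,m+2,\ldots,m+2n$. Then these $n+1$ integers can be arranged in a sequence $y_1,y_2,\ldots,y_{n+1}$ (each used exactly once) with $y_{n+1}=x$ such that for every $k=2,\ldots,n+1$, $|y_k-y_{k-1}|=2^{s_k}$ for some integer $s_k\ge 1$. *)

(* Defs.v *)
From mathcomp Require Import all_boot all_order all_algebra.
Set Implicit Arguments. Unset Strict Implicit. Unset Printing Implicit Defensive.
Import Order.TTheory GRing.Theory Num.Theory.
Local Open Scope ring_scope.

Definition odd_run (m : int) (n : nat) : seq int :=
  [seq m + (2 * i)%:Z | i <- iota 0 n.+1].

(* Main.v *)
Require Import Defs.
From mathcomp Require Import all_boot all_order all_algebra.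
From mathcomp Require Import zify.
Import Order.TTheory GRing.Theory Num.Theory.
Local Open Scope ring_scope.

Definition e (a b : nat) : bool := ((a - b + (b - a))%N \in [:: 1%N; 2%N]).

Lemma nat_path (n j : nat) : (j <= n)%N -> exists x0 p,
  [/\ perm_eq (x0 :: p) (iota 0 n.+1), path e x0 p, last x0 p = j,
      (n <= x0.+1)%N & ((j < n)%N -> x0 = n)].
Proof.
elim: n j => [|n IH] j hj.
  exists 0%N, [::]; split => //; by case: j hj.
have Hi : iota 0 n.+2 = rcons (iota 0 n.+1) n.+1.
  by rewrite -cats1 -addn1 iotaD.
case: (leqP j n) => hjn.
  have [x0 [p [H1 H2 H3 H4 H5]]] := IH j hjn.
  exists n.+1, (x0 :: p); split => //.
  - by rewrite Hi perm_sym perm_rcons perm_cons perm_sym.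
  - rewrite /= H2 andbT /e; apply/orP.
    have : (x0 <= n)%N.
      by have := perm_mem H1 x0; rewrite inE eqxx mem_iota /= => /esym.
    move=> hx; case: (ltnP x0 n) => h.
    + right; apply/eqP; lia.
    + left; apply/eqP; lia.
have ejn : j = n.+1 by lia.
subst j.
case: n IH hj hjn Hi => [|n] IH hj hjn Hi.
  by exists 0%N, [:: 1%N].
have [x0 [p [H1 H2 H3 H4 H5]]] := IH n (leqnSn _).
have hx0 := H5 (ltnSn _); subst x0.
exists n.+1, (rcons p n.+2); split => //.
- by rewrite Hi -rcons_cons perm_sym perm_rcons perm_sym perm_rcons perm_cons.
- rewrite rcons_path H2 H3 /= /e; apply/orP; right; apply/eqP; lia.
- by rewrite last_rcons.
all: try lia.
Qed.

Theorem lemma4p5 (m : int) (n : nat) (x : int) :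
  ~~ (2 %| m)%Z -> x \in odd_run m n ->
  exists y : seq int,
    [/\ perm_eq y (odd_run m n),
        last 0 y = x &
        forall k : nat, (k < n)%N ->
          exists s : nat, (1 <= s)%N /\
            `|nth 0 y k.+1 - nth 0 y k| = 2 ^+ s].
Proof.
move=> _ /mapP [j]; rewrite mem_iota add0n => /andP [_ hj] ->.
have [x0 [p [H1 H2 H3 _ _]]] := @nat_path n j hj.
set f := fun i : nat => m + (2 * i)%:Z.
have hs : size (x0 :: p) = n.+1 by rewrite (perm_size H1) size_iota.
exists (map f (x0 :: p)); split.
- by rewrite /odd_run perm_map.
- by rewrite /= last_map H3.
move=> k hk.
have /(pathP 0%N) hp := H2.
have hk' : (k < size p)%N by move: hs => /= [->].
have := hp k hk'.
have -> : nth 0%N p k = nth 0%N (x0 :: p) k.+1 by [].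
rewrite (nth_map 0%N) ?hs; last by lia.
rewrite (nth_map 0%N) ?hs; last by lia.
set a := nth 0%N (x0 :: p) k; set b := nth 0%N (x0 :: p) k.+1.
rewrite /e /f !inE => /orP [] /eqP hd.
- exists 1%N; split => //.
  have [-> | ->] : b = (a + 1)%N \/ a = (b + 1)%N by lia.
  - lia.
  - rewrite distrC; lia.
- exists 2%N; split => //.
  have [-> | ->] : b = (a + 2)%N \/ a = (b + 2)%N by lia.
  - lia.
  - rewrite distrC; lia.
Qed.
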